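(* Let $A\in\mathbb{R}^{n\times n}$, let $s$ be an integer with $1\leq s<d(A)$, and let $v_0\in\mathbb{R}^n$ with $\|v_0\|=1$ and $d(A,v_0)\geq s+1$. Let $\Sigma_*^A$ be the set of limit vectors (accumulation points) of the sequence $\{v_k\}$ of the Arnoldi cross iteration ACI($s$) started at $v_0$. Then: (1) $\Sigma_*^A$ is a closed and connected subset of $\mathbb{R}^n$; (2) $\Sigma_*^A\subseteq\Sigma^A$, and every $v_*\in\Sigma_*^A$ satisfies $v_*=T_{A^T}(T_A(v_* ))$.
   Context: Notation: for $A\in\mathbb{R}^{n\times n}$, $d(A)$ is the degree of the minimal polynomial of $A$, $d(A,v)$ is the grade of $v$ w.r.t. $A$ (degree of the monic polynomial $p$ of smallest degree with $p(A)v=0$), $\mathcal{K}_k(A,v)=\mathrm{span}\{v,Av,\dots,A^{k-1}v\}$, $\mathcal{M}_s$ is the set of real monic polynomials of degree $s$, and $\|\cdot\|$ is the Euclidean norm. For a matrix $B$ and a vector $u$ with $d(B,u)\geq s$, let $P_s(\cdot\,;u)\in\mathcal{M}_s$ (determined w.r.t. $B$) be the unique monic polynomial with $P_s(B;u)u\perp\mathcal{K}_s(B,u)$. The Arnoldi cross iteration ACI($s$) started at $v_0$ is: for $k=0,1,2,\dots$: $\widetilde w_k=P_s(A;v_k)v_k$, $w_k=\widetilde w_k/\|\widetilde w_k\|$, $\widetilde v_{k+1}=P_s(A^T;w_k)w_k$, $v_{k+1}=\widetilde v_{k+1}/\|\widetilde v_{k+1}\|$. Define $\Sigma^A:=\{v\in\mathbb{R}^n:\|v\|=1,\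 d(A,v)\geq s+1\}$ and, for unit $v$ with $d(A,v)\geq s+1$, $T_A(v):=P_s(A;v)v/\|P_s(A;v)v\|$; $T_{A^T}$ is defined analogously with $A^T$ in place of $A$. Thus $v_{k+1}=T_{A^T}(T_A(v_k))$. *)

(* Defs.v *)
From HB Require Import structures.
From mathcomp Require Import all_boot all_order all_algebra.
From mathcomp Require Import all_classical all_reals all_analysis.
From Stdlib Require Import ClassicalEpsilon.
Set Implicit Arguments. Unset Strict Implicit. Unset Printing Implicit Defensive.
Import Order.TTheory GRing.Theory Num.Theory.
Import numFieldTopology.Exports.
Local Open Scope ring_scope.
Local Open Scope classical_set_scope.

Section Defs.
Variables (R : realType) (n : nat).

Definition enorm (v : 'cV[R]_n) : R := Num.sqrt (\sum_i (v i 0) ^+ 2).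

Definition pmx (B : 'M[R]_n) (p : {poly R}) : 'M[R]_n :=
  \sum_(i < size p) p`_i *: B ^+ i.

Definition annihM (A : 'M[R]_n) (k : nat) : bool :=
  `[< exists p : {poly R}, [/\ p \is monic, size p = k.+1 & pmx A p = 0] >].

Definition annihV (A : 'M[R]_n) (v : 'cV[R]_n) (k : nat) : bool :=
  `[< exists p : {poly R}, [/\ p \is monic, size p = k.+1 & pmx A p *m v = 0] >].

End Defs.

Lemma annihM_ex (R : realType) (n : nat) (A : 'M[R]_n) : exists k, annihM A k.
Proof.
case: n A => [|m] A.
  exists 0%N; apply/asboolP; exists 1; split; rewrite ?monic1 ?size_poly1 //.
  by apply/matrixP => i; case: i.
exists m.+1; apply/asboolP; exists (char_poly A); split.
- exact: char_poly_monic.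
- exact: size_char_poly.
- rewrite -[RHS](Cayley_Hamilton A) /pmx /horner_mx /horner_morph horner_coef.
  rewrite size_map_poly; apply: eq_bigr => i _.
  by rewrite coef_map /= -mul_scalar_mx.
Qed.

Lemma annihV_ex (R : realType) (n : nat) (A : 'M[R]_n) (v : 'cV[R]_n) : exists k, annihV A v k.
Proof.
have [k /asboolP [p [pm ps pA]]] := annihM_ex A.
by exists k; apply/asboolP; exists p; split => //; rewrite pA mul0mx.
Qed.

Section Defs2.
Variables (R : realType) (n : nat).

Definition mdeg (A : 'M[R]_n) : nat := ex_minn (annihM_ex A).

Definition grade (A : 'M[R]_n) (v : 'cV[R]_n) : nat := ex_minn (annihV_ex A v).

Definition orthKrylov (B : 'M[R]_n) (u : 'cV[R]_n) (s : nat) (p : {poly R}) : Prop :=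
  [/\ p \is monic, size p = s.+1 &
      forall j : nat, (j < s)%N -> ((B ^+ j *m u)^T *m (pmx B p *m u)) = 0].

(* P_s(.;u) determined w.r.t. B (the unique such polynomial when d(B,u) >= s) *)
Definition Ps (B : 'M[R]_n) (u : 'cV[R]_n) (s : nat) : {poly R} :=
  epsilon (inhabits 0) (orthKrylov B u s).

Definition Tmap (B : 'M[R]_n) (s : nat) (v : 'cV[R]_n) : 'cV[R]_n :=
  let w := pmx B (Ps B v s) *m v in (enorm w)^-1 *: w.

Definition ACI (A : 'M[R]_n) (s : nat) (v0 : 'cV[R]_n) (k : nat) : 'cV[R]_n :=
  iter k (fun v => Tmap A^T s (Tmap A s v)) v0.

Definition SigmaA (A : 'M[R]_n) (s : nat) : set 'cV[R]_n :=
  [set v | enorm v = 1 /\ (s.+1 <= grade A v)%N].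

Definition limit_points (u : nat -> 'cV[R]_n) : set 'cV[R]_n :=
  [set x | forall e : R, 0 < e -> forall N : nat,
             exists k : nat, (N <= k)%N /\ enorm (u k - x) < e].

End Defs2.

(* Main.v *)
Require Import Defs.
From HB Require Import structures.
From mathcomp Require Import all_boot all_order all_algebra.
From mathcomp Require Import all_classical all_reals all_analysis.
From mathcomp Require Import ring lra.
From Stdlib Require Import ClassicalEpsilon.
Import Order.TTheory GRing.Theory Num.Theory.
Import numFieldTopology.Exports.
Local Open Scope ring_scope.
Local Open Scope classical_set_scope.

Module P1.

Set Implicit Arguments. Unset Strict Implicit. Unset Printing Implicit Defensive.
Section Basics.
Variable R : realType.

Definition dot n (x y : 'cV[R]_n) : R := \sum_i x i 0 * y i 0.

Lemma dotC n (x y : 'cV[R]_n) : dot x y = dot y x.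
Proof. by apply: eq_bigr => i _; rewrite mulrC. Qed.

Lemma dotDl n (x y z : 'cV[R]_n) : dot (x + y) z = dot x z + dot y z.
Proof. by rewrite /dot -big_split; apply: eq_bigr => i _; rewrite mxE mulrDl. Qed.

Lemma dotDr n (x y z : 'cV[R]_n) : dot z (x + y) = dot z x + dot z y.
Proof. by rewrite dotC dotDl !(dotC z). Qed.

Lemma dotZl n a (x y : 'cV[R]_n) : dot (a *: x) y = a * dot x y.
Proof. by rewrite /dot mulr_sumr; apply: eq_bigr => i _; rewrite mxE mulrA. Qed.

Lemma dotZr n a (x y : 'cV[R]_n) : dot y (a *: x) = a * dot y x.
Proof. by rewrite dotC dotZl dotC. Qed.

Lemma dotNl n (x y : 'cV[R]_n) : dot (- x) y = - dot x y.
Proof. by rewrite -scaleN1r dotZl mulN1r. Qed.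

Lemma dotNr n (x y : 'cV[R]_n) : dot y (- x) = - dot y x.
Proof. by rewrite dotC dotNl dotC. Qed.

Lemma dotBl n (x y z : 'cV[R]_n) : dot (x - y) z = dot x z - dot y z.
Proof. by rewrite dotDl dotNl. Qed.

Lemma dotBr n (x y z : 'cV[R]_n) : dot z (x - y) = dot z x - dot z y.
Proof. by rewrite dotDr dotNr. Qed.

Lemma dot0l n (x : 'cV[R]_n) : dot 0 x = 0.
Proof. by rewrite /dot big1 // => i _; rewrite mxE mul0r. Qed.

Lemma dot0r n (x : 'cV[R]_n) : dot x 0 = 0.
Proof. by rewrite dotC dot0l. Qed.

Lemma dot_sumr n (I : finType) (F : I -> 'cV[R]_n) x :
  dot x (\sum_i F i) = \sum_i dot x (F i).
Proof.
rewrite /dot exchange_big /=; apply: eq_bigr => i _.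
by rewrite summxE mulr_sumr.
Qed.

Lemma trmx_dot n (x y : 'cV[R]_n) : (x^T *m y) 0 0 = dot x y.
Proof. by rewrite mxE; apply: eq_bigr => i _; rewrite mxE. Qed.

Lemma trmx_dot0 n (x y : 'cV[R]_n) : (x^T *m y = 0) <-> dot x y = 0.
Proof.
split=> [h|h]; first by rewrite -trmx_dot h mxE.
by apply/matrixP => i j; rewrite !ord1 trmx_dot h mxE.
Qed.

Lemma dotMl m n (M : 'M[R]_(m, n)) x y : dot (M *m x) y = dot x (M^T *m y).
Proof.
rewrite -!trmx_dot trmx_mul -mulmxA; congr (_ 0 0).
Qed.

Lemma dot_ge0 n (x : 'cV[R]_n) : 0 <= dot x x.
Proof. by apply: sumr_ge0 => i _; rewrite -expr2 sqr_ge0. Qed.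

Lemma dot_eq0 n (x : 'cV[R]_n) : dot x x = 0 -> x = 0.
Proof.
move=> /eqP; rewrite psumr_eq0 => [/allP h|i _]; last by rewrite -expr2 sqr_ge0.
apply/matrixP => i j; rewrite ord1 mxE.
by have /(_ (mem_index_enum i)) := h i; rewrite /= mulf_eq0 orbb => /eqP.
Qed.

Lemma enormE n (x : 'cV[R]_n) : enorm x = Num.sqrt (dot x x).
Proof. by rewrite /enorm /dot; congr Num.sqrt; apply: eq_bigr => i _; rewrite expr2. Qed.

Lemma enorm_ge0 n (x : 'cV[R]_n) : 0 <= enorm x.
Proof. exact: sqrtr_ge0. Qed.

Lemma enorm_sq n (x : 'cV[R]_n) : enorm x ^+ 2 = dot x x.
Proof. by rewrite enormE sqr_sqrtr // dot_ge0. Qed.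

Lemma enorm_eq0 n (x : 'cV[R]_n) : enorm x = 0 -> x = 0.
Proof. by move=> h; apply: dot_eq0; rewrite -enorm_sq h expr0n. Qed.

Lemma enorm0 n : enorm (0 : 'cV[R]_n) = 0.
Proof. by rewrite enormE dot0l sqrtr0. Qed.

Lemma enormZ n a (x : 'cV[R]_n) : enorm (a *: x) = `|a| * enorm x.
Proof.
rewrite !enormE dotZl dotZr mulrA sqrtrM ?sqr_ge0 //.
by rewrite -expr2 sqrtr_sqr.
Qed.

Lemma enormN n (x : 'cV[R]_n) : enorm (- x) = enorm x.
Proof. by rewrite -scaleN1r enormZ normrN normr1 mul1r. Qed.

Lemma enormB n (x y : 'cV[R]_n) : enorm (x - y) = enorm (y - x).
Proof. by rewrite -enormN opprB. Qed.

Lemma CS n (x y : 'cV[R]_n) : dot x y <= enorm x * enorm y.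
Proof.
have [->|xn0] := eqVneq x 0; first by rewrite dot0l enorm0 mul0r.
have [->|yn0] := eqVneq y 0; first by rewrite dot0r enorm0 mulr0.
have ha : 0 < enorm x.
  by rewrite lt_def enorm_ge0 andbT; apply/eqP => /enorm_eq0; apply/eqP.
have hb : 0 < enorm y.
  by rewrite lt_def enorm_ge0 andbT; apply/eqP => /enorm_eq0; apply/eqP.
have h : 0 <= dot (enorm y *: x - enorm x *: y) (enorm y *: x - enorm x *: y).
  exact: dot_ge0.
rewrite !(dotBl, dotBr, dotZl, dotZr) -!enorm_sq (dotC y x) in h.
have hab : 0 < enorm x * enorm y by rewrite mulr_gt0.
have : (enorm x * enorm y) * (dot x y) <= (enorm x * enorm y) * (enorm x * enorm y).
  nra.
by rewrite ler_pM2l.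
Qed.

Lemma CSabs n (x y : 'cV[R]_n) : `|dot x y| <= enorm x * enorm y.
Proof.
rewrite ler_norml CS andbT.
have := CS (- x) y; rewrite dotNl enormN; lra.
Qed.

Lemma enormD n (x y : 'cV[R]_n) : enorm (x + y) <= enorm x + enorm y.
Proof.
rewrite -(ler_pXn2r (n := 2)) ?nnegrE ?addr_ge0 ?enorm_ge0 //.
rewrite enorm_sq dotDl !dotDr (dotC y x) -!enorm_sq.
have := CS x y; nra.
Qed.

Lemma enormDB n (x y z : 'cV[R]_n) : enorm (x - z) <= enorm (x - y) + enorm (y - z).
Proof. by rewrite -(subrKA y) enormD. Qed.

Lemma enorm_rev n (x y : 'cV[R]_n) : enorm x - enorm y <= enorm (x - y).
Proof. by rewrite lerBlDr; apply: le_trans (enormD _ _); rewrite subrK. Qed.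

Lemma enorm_coord n (x : 'cV[R]_n) i : `|x i 0| <= enorm x.
Proof.
rewrite /enorm -sqrtr_sqr ler_sqrt ?sumr_ge0 // => [|j _]; last exact: sqr_ge0.
by rewrite (bigD1 i) //= lerDl sumr_ge0 // => j _; rewrite sqr_ge0.
Qed.

Lemma enorm_le_sum n (x : 'cV[R]_n) : enorm x <= \sum_i `|x i 0|.
Proof.
rewrite -(ler_pXn2r (n := 2)) ?nnegrE ?enorm_ge0 ?sumr_ge0 //.
rewrite enorm_sq expr2 mulr_suml; apply: ler_sum => i _.
apply: (@le_trans _ _ (`|x i 0| * `|x i 0|)).
  by rewrite -normrM real_ler_norm ?num_real.
apply: ler_wpM2l => //; rewrite (bigD1 i) //= lerDl sumr_ge0 //.
Qed.

End Basics.

End P1.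
Import P1.

Module P2.
Set Implicit Arguments. Unset Strict Implicit. Unset Printing Implicit Defensive.

Section Topo.
Variable R : realType.

Lemma mxn_coord p q (M : 'M[R]_(p, q)) i j : `|M i j| <= `|M|.
Proof.
have -> : `|M| = mx_norm M by [].
rewrite mx_normrE.
exact: (le_bigmax _ (fun ij : 'I_p * 'I_q => `|M ij.1 ij.2|) (i, j)).
Qed.

Lemma mxn_le_enorm n (x : 'cV[R]_n) : `|x| <= enorm x.
Proof.
have -> : `|x| = mx_norm x by [].
rewrite mx_normrE; apply/bigmax_leP; split.
  exact: enorm_ge0.
by move=> [i j] _ /=; rewrite ord1; exact: enorm_coord.
Qed.

Lemma enorm_le_mxn n (x : 'cV[R]_n) : enorm x <= n%:R * `|x|.
Proof.
apply: le_trans (enorm_le_sum x) _.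
apply: le_trans (ler_sum _ (G := fun _ => `|x|) _) _.
  by move=> i _; exact: mxn_coord.
by rewrite sumr_const card_ord mulr_natl.
Qed.

Lemma mxbound p q (M : 'M[R]_(p, q)) :
  exists c, 0 <= c /\ forall x, enorm (M *m x) <= c * enorm x.
Proof.
exists (\sum_i \sum_j `|M i j|); split.
  by apply: sumr_ge0 => i _; apply: sumr_ge0.
move=> x; apply: le_trans (enorm_le_sum _) _.
rewrite mulr_suml; apply: ler_sum => i _.
rewrite mxE mulr_suml; apply: le_trans (ler_norm_sum _ _ _) _.
apply: ler_sum => j _; rewrite normrM ler_wpM2l //.
exact: enorm_coord.
Qed.

Lemma BW n (a : nat -> 'cV[R]_n) : (forall m, enorm (a m) <= 1) ->
  exists x, forall e, 0 < e -> forall N, exists m, (N <= m)%N /\ enorm (a m - x) < e.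
Proof.
move=> a1.
pose b m := (a m)^T.
pose K := closed_ball (0 : 'rV[R]_n) 2.
have cK : compact K.
  apply: bounded_closed_compact; last exact: closed_ball_closed.
  exists 2; split; first by rewrite num_real.
  move=> M M2 v; rewrite /K closed_ballE //= /closed_ball_ /= sub0r normrN => hv.
  by apply: le_trans hv (ltW M2).
have Fp : ProperFilter (b @ \oo) by apply: fmap_proper_filter.
have bK : forall m, K (b m).
  move=> m; rewrite /K closed_ballE //= /closed_ball_ /= sub0r normrN.
  have -> : `|b m| = mx_norm (b m) by [].
  rewrite mx_normrE; apply/bigmax_leP; split => // -[i j] _ /=.
  rewrite ord1 mxE; apply: le_trans (enorm_coord _ _) _.
  by apply: le_trans (a1 m) _; lra.
have FK : (b @ \oo) K by rewrite /fmap /=; apply: filterE; exact: bK.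
have [x [Kx clx]] := cK _ Fp FK.
exists x^T => e e0 N.
have e'0 : 0 < e / (n%:R + 1) by rewrite divr_gt0 // ltr_wpDl.
have := clx (b @` [set m | (N <= m)%N]) (ball x (e / (n%:R + 1))).
case.
- by apply: filterS (nbhs_infty_ge N) => m Nm; exists m.
- exact: nbhsx_ballx.
move=> _ [[m Nm <-] hb]; exists m; split => //.
rewrite -ball_normE /ball_ /= in hb.
apply: le_lt_trans (enorm_le_sum _) _.
apply: le_lt_trans (ler_sum _ (G := fun _ => `|x - b m|) _) _.
  move=> i _; apply: le_trans (mxn_coord _ 0 i).
  by rewrite !mxE -normrN opprB.
rewrite sumr_const card_ord -mulr_natl.
apply: (@le_lt_trans _ _ (n%:R * (e / (n%:R + 1)))).
  by rewrite ler_wpM2l // ltW.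
have n0 : 0 <= n%:R :> R by [].
rewrite mulrA ltr_pdivrMr ?ltr_wpDl //; nra.
Qed.

End Topo.

End P2.
Import P2.

Module P3.
Set Implicit Arguments. Unset Strict Implicit. Unset Printing Implicit Defensive.

Section Topo2.
Variable R : realType.
Variable n : nat.
Implicit Types (u : nat -> 'cV[R]_n).

Lemma ball_enorm (p q : 'cV[R]_n) r : ball p r q -> enorm (q - p) <= n%:R * r.
Proof.
rewrite -ball_normE /ball_ /= => h.
apply: le_trans (enorm_le_mxn _) _; rewrite ler_wpM2l //.
by rewrite -normrN opprB ltW.
Qed.

Lemma nbhs_enorm (p : 'cV[R]_n) B : nbhs p B ->
  exists2 e, 0 < e & forall q, enorm (q - p) < e -> B q.
Proof.
move=> /nbhs_ballP [e e0 sB]; exists e => // q hq; apply: sB.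
rewrite -ball_normE /ball_ /=; apply: le_lt_trans (mxn_le_enorm _) _.
by rewrite enormB.
Qed.

Lemma enorm_nbhs (p : 'cV[R]_n) e : 0 < e ->
  exists2 B, nbhs p B & forall q, B q -> enorm (q - p) < e.
Proof.
move=> e0; exists (ball p (e / (n%:R + 1))); first by apply: nbhsx_ballx; rewrite divr_gt0 // ltr_wpDl.
move=> q /ball_enorm h; apply: le_lt_trans h _.
have n0 : 0 <= n%:R :> R by [].
rewrite mulrA ltr_pdivrMr ?ltr_wpDl //; nra.
Qed.

Lemma limit_closed u : closed (limit_points u).
Proof.
move=> p cp e e0 N.
have e20 : 0 < e / 2 by rewrite divr_gt0.
have [B Bp hB] := enorm_nbhs p e20.
have [q [Lq Bq]] := cp B Bp.
have [k [Nk hk]] := Lq _ e20 N.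
exists k; split => //; apply: le_lt_trans (enormDB _ q _) _.
have := hB q Bq; lra.
Qed.

Lemma limit_le1 u x : (forall k, enorm (u k) <= 1) -> limit_points u x -> enorm x <= 1.
Proof.
move=> u1 Lx; apply/ler_addgt0Pr => e e0.
have [k [_ hk]] := Lx e e0 0%N.
have := enorm_rev x (u k); rewrite enormB => h.
have := u1 k; lra.
Qed.

Lemma in_closure_enorm (A : set 'cV[R]_n) x :
  (forall e, 0 < e -> exists a, A a /\ enorm (a - x) < e) -> closure A x.
Proof.
move=> h B /nbhs_enorm [e e0 hB].
have [a [Aa ha]] := h e e0; exists a; split => //; exact: hB.
Qed.

Lemma limit_connected u : (forall k, enorm (u k) <= 1) ->
  (forall e, 0 < e -> exists N, forall k, (N <= k)%N -> enorm (u k.+1 - u k) < e) ->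
  connected (limit_points u).
Proof.
move=> u1 steps.
set L := limit_points u.
have Lcl : closed L by exact: limit_closed.
apply: contrapT => /connectedPn [E [En LE [s1 s2]]].
set A0 := E false; set A1 := E true.
have A0L : A0 `<=` L by rewrite LE => x ?; left.
have A1L : A1 `<=` L by rewrite LE => x ?; right.
have notboth : forall x, closure A0 x -> closure A1 x -> False.
  move=> x c0 c1.
  have Lx : L x by apply: Lcl; apply: (closure_subset A0L).
  move: Lx; rewrite LE => -[x0|x1].
    by have : (A0 `&` closure A1) x by []; rewrite s2.
  by have : (closure A0 `&` A1) x by []; rewrite s1.
have [d d0 gap] : exists2 d, 0 < d & forall a b, A0 a -> A1 b -> d <= enorm (a - b).
  apply: contrapT => hno.
  have h : forall m : nat, exists ab : 'cV[R]_n * 'cV[R]_n,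
      [/\ A0 ab.1, A1 ab.2 & enorm (ab.1 - ab.2) < m.+1%:R^-1].
    move=> m; apply: contrapT => hm; apply: hno; exists (m.+1%:R^-1) => // a b Aa Ab.
    rewrite leNgt; apply/negP => hlt; apply: hm; by exists (a, b).
  have [f hf] := boolp.choice h.
  have hb1 : forall m, enorm (f m).1 <= 1.
    by move=> m; have [h1 _ _] := hf m; exact: limit_le1 u1 (A0L _ h1).
  have [x hx] := BW hb1.
  apply: (notboth x).
    apply: in_closure_enorm => e e0; have [m [_ hm]] := hx e e0 0%N.
    by exists (f m).1; split => //; have [] := hf m.
  apply: in_closure_enorm => e e0.
  have e20 : 0 < e / 2 by rewrite divr_gt0.
  have [N hN] := ltr_add_invr (y := 0) e20; rewrite add0r in hN.
  have [m [Nm hm]] := hx _ e20 N.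
  have [_ B1 hab] := hf m.
  exists (f m).2; split => //.
  apply: le_lt_trans (enormDB _ (f m).1 _) _.
  have : m.+1%:R^-1 <= N.+1%:R^-1 :> R.
    by rewrite lef_pV2 ?posrE // ler_nat ltnS.
  rewrite enormB in hab; rewrite /= in hm; move=> H; rewrite [X in _ < X](splitr e) ltrD //.
  exact: (lt_le_trans hab (le_trans H (ltW hN))).
have d30 : 0 < d / 3 by rewrite divr_gt0.
have [N0 hN0] := steps _ d30.
pose near0 x := exists a, A0 a /\ enorm (x - a) < d / 3.
pose near1 x := exists b, A1 b /\ enorm (x - b) < d / 3.
have nb : forall x, near0 x -> near1 x -> False.
  move=> x [a [Aa ha]] [b [Bb hb]].
  have := gap a b Aa Bb; have := enormDB a x b; rewrite enormB in ha; lra.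
have chain : forall dd k, (N0 <= k)%N -> near0 (u k) -> near1 (u (k + dd)%N) ->
    exists j, (k <= j)%N /\ ~ near0 (u j) /\ ~ near1 (u j).
  elim => [|dd IH] k Nk h0 h1; first by rewrite addn0 in h1; case: (nb _ h0 h1).
  have [h0'|h0'] := pselect (near0 (u k.+1)).
    have h1' : near1 (u (k.+1 + dd)%N) by rewrite addSnnS.
    have [j [kj hj]] := IH k.+1 (leqW Nk) h0' h1'.
    by exists j; split => //; apply: ltnW.
  exists k.+1; split => //; split => // -[b [Bb hb]].
  have [a [Aa ha]] := h0.
  have := gap a b Aa Bb; have := hN0 k Nk.
  have := enormDB a (u k) b; have := enormDB (u k) (u k.+1) b.
  rewrite (enormB a (u k)) (enormB (u k) (u k.+1)); lra.
have inf : forall N, exists j, (N <= j)%N /\ ~ near0 (u j) /\ ~ near1 (u j).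
  move=> N.
  have [a0 Aa0] := En false; have [b0 Bb0] := En true.
  have [k [Nk hk]] := A0L _ Aa0 _ d30 (maxn N N0).
  have [k2 [kk2 hk2]] := A1L _ Bb0 _ d30 k.
  have h1' : near1 (u (k + (k2 - k))%N) by rewrite subnKC //; exists b0.
  have [j [kj hj]] := chain (k2 - k)%N k (leq_trans (leq_maxr _ _) Nk)
    (ex_intro _ a0 (conj Aa0 hk)) h1'.
  exists j; split => //; apply: leq_trans kj; apply: leq_trans Nk; exact: leq_maxl.
have [f hf] := boolp.choice inf.
have [x hx] := @BW _ _ (fun m => u (f m)) (fun m => u1 _).
have Lx : L x.
  move=> e e0 N; have [m [Nm hm]] := hx e e0 N.
  by exists (f m); split => //; apply: leq_trans Nm _; have [] := hf m.
move: Lx; rewrite LE => -[x0|x1].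
  have [m [_ hm]] := hx _ d30 0%N; have [_ [h0 _]] := hf m.
  by apply: h0; exists x.
have [m [_ hm]] := hx _ d30 0%N; have [_ [_ h1]] := hf m.
by apply: h1; exists x.
Qed.

End Topo2.

End P3.
Import P3.

Module P4.
Set Implicit Arguments. Unset Strict Implicit. Unset Printing Implicit Defensive.

Section Poly.
Variable R : realType.
Variable m : nat.
Local Notation N := m.+1.
Implicit Types (B : 'M[R]_N) (x : 'cV[R]_N) (p q : {poly R}).

Lemma pmxE B p : pmx B p = horner_mx B p.
Proof.
rewrite /pmx /horner_mx /horner_morph horner_coef.
rewrite size_map_poly; apply: eq_bigr => i _.
by rewrite coef_map /= -mul_scalar_mx.
Qed.

Lemma pmx_sum B p k : (size p <= k)%N -> pmx B p = \sum_(i < k) p`_i *: B ^+ i.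
Proof.
move=> hk; rewrite /pmx (big_ord_widen k (fun i => p`_i *: B ^+ i)) //.
rewrite big_mkcond /=; apply: eq_bigr => i _.
case: ifP => // /negbT; rewrite -leqNgt => /leq_sizeP -> //.
by rewrite scale0r.
Qed.

Lemma pmxD B p q : pmx B (p + q) = pmx B p + pmx B q.
Proof. by rewrite !pmxE rmorphD. Qed.

Lemma pmxB B p q : pmx B (p - q) = pmx B p - pmx B q.
Proof. by rewrite !pmxE rmorphB. Qed.

Lemma pmxZ B a p : pmx B (a *: p) = a *: pmx B p.
Proof. by rewrite !pmxE horner_mxZ. Qed.

Lemma pmxM B p q : pmx B (p * q) = pmx B p *m pmx B q.
Proof. by rewrite !pmxE rmorphM mulmxE. Qed.

Lemma pmxXn B k : pmx B 'X^k = B ^+ k.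
Proof. by rewrite pmxE rmorphXn /= horner_mx_X. Qed.

Lemma trmxX B k : (B ^+ k)^T = B^T ^+ k.
Proof.
elim: k => [|k IH]; first by rewrite !expr0 trmx1.
by rewrite exprSr exprS -!mulmxE trmx_mul IH.
Qed.

Lemma pmx_tr B p : pmx B^T p = (pmx B p)^T.
Proof.
rewrite /pmx raddf_sum /=; apply: eq_bigr => i _.
by rewrite linearZ /= trmxX.
Qed.

Variable s : nat.

Definition Kry B x : 'M[R]_(N, s) := \matrix_(i, j) (B ^+ j *m x) i 0.

Lemma Kry_mul B x (c : 'cV[R]_s) :
  Kry B x *m c = \sum_(j < s) c j 0 *: (B ^+ j *m x).
Proof.
apply/matrixP => i k; rewrite ord1 !mxE summxE; apply: eq_bigr => j _.
by rewrite !mxE mulrC.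
Qed.

Lemma Kry_delta B x (j : 'I_s) : Kry B x *m delta_mx j 0 = B ^+ j *m x.
Proof.
apply/matrixP => i k; rewrite ord1 !mxE (bigD1 j) //= big1 => [|l ljn].
  by rewrite !mxE !eqxx mulr1 addr0.
by rewrite !mxE (negbTE ljn) mulr0.
Qed.

Lemma Kry_lin B x y (c : 'cV[R]_s) : Kry B (x - y) *m c = Kry B x *m c - Kry B y *m c.
Proof.
rewrite !Kry_mul -sumrB; apply: eq_bigr => j _.
by rewrite mulmxBr scalerBr.
Qed.

Definition cf (c : 'cV[R]_s) (i : nat) : R := \sum_(j < s | val j == i) c j 0.

Lemma cfE c (j : 'I_s) : cf c j = c j 0.
Proof.
rewrite /cf (big_pred1 j) // => k /=; exact: val_eqE.
Qed.

Definition pc (c : 'cV[R]_s) : {poly R} := 'X^s + \poly_(i < s) cf c i.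

Lemma size_pc c : size (pc c) = s.+1.
Proof. by rewrite /pc size_polyDl size_polyXn // ltnS size_poly. Qed.

Lemma pc_monic c : pc c \is monic.
Proof.
by rewrite monicE /lead_coef size_pc coefD coefXn eqxx coef_poly ltnn addr0.
Qed.

Lemma lowdeg B x q : (size q <= s)%N ->
  pmx B q *m x = Kry B x *m (\col_(j < s) q`_j).
Proof.
move=> hq; rewrite (pmx_sum B hq) Kry_mul mulmx_suml; apply: eq_bigr => j _.
by rewrite mxE -scalemxAl.
Qed.

Lemma pmx_pc B x c : pmx B (pc c) *m x = B ^+ s *m x + Kry B x *m c.
Proof.
rewrite /pc pmxD mulmxDl pmxXn; congr (_ + _).
rewrite lowdeg ?size_poly //; congr (_ *m _); apply/matrixP => i j.
by rewrite ord1 !mxE coef_poly ltn_ord cfE.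
Qed.

Lemma monic_sub p q : p \is monic -> q \is monic -> size p = s.+1 -> size q = s.+1 ->
  (size (q - p)%R <= s)%N.
Proof.
move=> mp mq sp sq; apply/leq_sizeP => j hj; rewrite coefB.
move: hj; rewrite leq_eqVlt => /orP [/eqP <-|hj].
  move/monicP: mp; move/monicP: mq; rewrite /lead_coef sp sq /= => -> ->.
  by rewrite subrr.
by rewrite !nth_default ?subrr // ?sp ?sq.
Qed.

End Poly.

End P4.
Import P4.

Module P5.
Set Implicit Arguments. Unset Strict Implicit. Unset Printing Implicit Defensive.

Section Krylov.
Variable R : realType.
Variable m : nat.
Local Notation N := m.+1.
Variable s : nat.
Implicit Types (B : 'M[R]_N) (x : 'cV[R]_N) (p q : {poly R}).
Local Notation Kry := (@Kry R m s).
Local Notation pc := (@pc R s).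
Local Notation cf := (@cf R s).

Definition res B x := pmx B (Ps B x s) *m x.
Definition rho B x := enorm (res B x).

Lemma dot_suml n (I : finType) (F : I -> 'cV[R]_n) y :
  dot (\sum_i F i) y = \sum_i dot (F i) y.
Proof. by rewrite dotC dot_sumr; apply: eq_bigr => i _; rewrite dotC. Qed.

Lemma orth_low B x p q : orthKrylov B x s p -> (size q <= s)%N ->
  dot (pmx B q *m x) (pmx B p *m x) = 0.
Proof.
move=> [_ _ h] hq; rewrite (pmx_sum B hq) mulmx_suml dot_suml big1 // => i _.
rewrite -scalemxAl dotZl; apply/eqP; rewrite mulf_eq0; apply/orP; right.
by apply/eqP; apply/trmx_dot0; apply: h.
Qed.

Lemma orth_key B x p q : orthKrylov B x s p -> q \is monic -> size q = s.+1 ->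
  dot (pmx B p *m x) (pmx B q *m x) = dot (pmx B p *m x) (pmx B p *m x).
Proof.
move=> hp mq sq; have [mp sp _] := hp.
rewrite (_ : pmx B q = pmx B p + pmx B (q - p)); last by rewrite -pmxD addrC subrK.
rewrite mulmxDl dotDr (dotC (pmx B p *m x) (pmx B (q - p) *m x)).
by rewrite (orth_low hp (monic_sub mp mq sp sq)) addr0.
Qed.

Lemma optimal B x p q : orthKrylov B x s p -> q \is monic -> size q = s.+1 ->
  enorm (pmx B p *m x) <= enorm (pmx B q *m x).
Proof.
move=> hp mq sq.
have h := orth_key hp mq sq; rewrite -enorm_sq in h.
have := CS (pmx B p *m x) (pmx B q *m x); rewrite h expr2.
have [->|hn] := eqVneq (enorm (pmx B p *m x)) 0; first by rewrite enorm_ge0.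
have hp0 : 0 < enorm (pmx B p *m x) by rewrite lt_def hn enorm_ge0.
by rewrite ler_pM2l.
Qed.

Lemma ext_ann B x p : p \is monic -> (size p <= s.+1)%N -> pmx B p *m x = 0 ->
  exists q, [/\ q \is monic, size q = s.+1 & pmx B q *m x = 0].
Proof.
move=> mp sp hp; exists ('X^(s.+1 - size p) * p); split.
- by rewrite monicMl // monicXn.
- rewrite size_Mmonic ?monicXn_neq0 // ?size_polyXn //=; last first.
    by rewrite -size_poly_eq0 size_polyXn.
  by rewrite subnK.
- by rewrite (pmxM B) -mulmxA hp mulmx0.
Qed.

Lemma ker_ann B x (c : 'cV[R]_s) : c != 0 -> Kry B x *m c = 0 ->
  exists q, [/\ q \is monic, size q = s.+1 & pmx B q *m x = 0].
Proof.
move=> cn0 hc.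
pose p0 := \poly_(i < s) cf c i.
have col : (\col_(j < s) p0`_j) = c.
  by apply/matrixP => i j; rewrite ord1 !mxE coef_poly ltn_ord cfE.
have hp0 : pmx B p0 *m x = 0 by rewrite (lowdeg (s:=s)) ?size_poly // col.
have p0n0 : p0 != 0.
  apply/negP => /eqP h0; move: cn0; rewrite -col; apply/negP; rewrite negbK.
  by apply/eqP/matrixP => i j; rewrite !mxE h0 coef0.
have lc0 : lead_coef p0 != 0 by rewrite lead_coef_eq0.
apply: (@ext_ann B x ((lead_coef p0)^-1 *: p0)).
- by rewrite monicE lead_coefZ mulVf.
- by rewrite size_scale ?invr_eq0 // ltnW // ltnS size_poly.
- by rewrite pmxZ -scalemxAl hp0 scaler0.
Qed.

Lemma Ps_spec B x : orthKrylov B x s (Ps B x s).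
Proof.
apply: epsilon_spec.
have [[c [cn0 hc]]|hinj] := pselect (exists c : 'cV[R]_s, c != 0 /\ Kry B x *m c = 0).
  have [q [mq sq hq]] := ker_ann cn0 hc.
  by exists q; split => // j _; rewrite hq mulmx0.
have inj : forall c : 'cV[R]_s, Kry B x *m c = 0 -> c = 0.
  move=> c hc; apply: contrapT => cn0; apply: hinj; exists c; split => //.
  exact/eqP.
set K := Kry B x; set G := K^T *m K.
have Gu : G \in unitmx.
  rewrite unitmxE unitfE; apply/negP => /det0P [v vn0 hv].
  have hK : K *m v^T = 0.
    apply: dot_eq0; rewrite -trmx_dot trmx_mul trmxK -mulmxA mulmxA.
    by rewrite mulmxA -(mulmxA v) -/G hv mul0mx mxE.
  by move: vn0; rewrite -(trmxK v) (inj _ hK) trmx0 eqxx.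
exists (pc (- (invmx G *m (K^T *m (B ^+ s *m x))))); split.
- exact: pc_monic.
- exact: size_pc.
move=> j hj; rewrite pmx_pc -/K.
have -> : B ^+ j *m x = K *m delta_mx (Ordinal hj) 0 by rewrite Kry_delta.
rewrite trmx_mul -mulmxA mulmxDr !mulmxN (mulmxA K^T K) -/G mulKVmx //.
by rewrite subrr mulmx0.
Qed.

Lemma Ps_monic B x : Ps B x s \is monic.
Proof. by have [] := Ps_spec B x. Qed.

Lemma Ps_size B x : size (Ps B x s) = s.+1.
Proof. by have [] := Ps_spec B x. Qed.

Lemma res_opt B x q : q \is monic -> size q = s.+1 -> rho B x <= enorm (pmx B q *m x).
Proof. exact: optimal (Ps_spec B x). Qed.

Lemma res_key B x q : q \is monic -> size q = s.+1 ->
  dot (res B x) (pmx B q *m x) = rho B x ^+ 2.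
Proof. by move=> mq sq; rewrite enorm_sq; exact: orth_key (Ps_spec B x) mq sq. Qed.

Lemma res_low B x q : (size q <= s)%N -> dot (pmx B q *m x) (res B x) = 0.
Proof. exact: orth_low (Ps_spec B x). Qed.

Lemma grade_ann B x p : (s.+1 <= grade B x)%N -> p \is monic -> (size p <= s.+1)%N ->
  pmx B p *m x = 0 -> False.
Proof.
move=> hg mp sp hp; move: hg; rewrite /grade; case: ex_minnP => g _ hmin hsg.
have sp0 : (0 < size p)%N by rewrite size_poly_gt0 monic_neq0.
have h : annihV B x (size p).-1.
  by apply/asboolP; exists p; split => //; rewrite prednK.
have hgp := hmin _ h.
have : (g <= s)%N by apply: leq_trans hgp _; rewrite -ltnS prednK.
by rewrite leqNgt hsg.
Qed.

Lemma grade_low B x : ~~ (s.+1 <= grade B x)%N ->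
  exists q, [/\ q \is monic, size q = s.+1 & pmx B q *m x = 0].
Proof.
rewrite /grade; case: ex_minnP => g hg _; rewrite -ltnNge ltnS => gs.
move/asboolP: hg => [p [mp sp hp]]; apply: (ext_ann mp) => //.
by rewrite sp ltnS.
Qed.

Lemma rho_pos B x : (s.+1 <= grade B x)%N -> 0 < rho B x.
Proof.
move=> hg; rewrite lt_def enorm_ge0 andbT; apply/eqP => /enorm_eq0 h.
exact: grade_ann hg (Ps_monic B x) (eq_leq (Ps_size B x)) h.
Qed.

Lemma rho_pos_grade B x : 0 < rho B x -> (s.+1 <= grade B x)%N.
Proof.
move=> hr; apply: contraTT hr => /grade_low [q [mq sq hq]].
by have := res_opt B x mq sq; rewrite hq enorm0 -leNgt.
Qed.

Lemma rho_pos_inj B x : 0 < rho B x -> forall c : 'cV[R]_s, Kry B x *m c = 0 -> c = 0.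
Proof.
move=> hr c hc; apply: contrapT => cn0.
have [q [mq sq hq]] := ker_ann (introN eqP cn0) hc.
by have := res_opt B x mq sq; rewrite hq enorm0 leNgt hr.
Qed.

End Krylov.

End P5.
Import P5.

Module P6.
Set Implicit Arguments. Unset Strict Implicit. Unset Printing Implicit Defensive.

Section Step.
Variable R : realType.
Variable m : nat.
Local Notation N := m.+1.
Variable s : nat.
Implicit Types (B : 'M[R]_N) (x y : 'cV[R]_N) (p q : {poly R}).
Local Notation res := (@res R m s).
Local Notation rho := (@rho R m s).

Definition mxc k l (M : 'M[R]_(k, l)) : R := \sum_i \sum_j `|M i j|.

Lemma mxc_ge0 k l (M : 'M[R]_(k, l)) : 0 <= mxc M.
Proof. by apply: sumr_ge0 => i _; apply: sumr_ge0. Qed.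

Lemma mxc_bound k l (M : 'M[R]_(k, l)) (x : 'cV[R]_l) : enorm (M *m x) <= mxc M * enorm x.
Proof.
apply: le_trans (enorm_le_sum _) _.
rewrite /mxc mulr_suml; apply: ler_sum => i _.
rewrite mxE mulr_suml; apply: le_trans (ler_norm_sum _ _ _) _.
apply: ler_sum => j _; rewrite normrM ler_wpM2l //.
exact: enorm_coord.
Qed.

Lemma TmapE B x : Tmap B s x = (rho B x)^-1 *: res B x.
Proof. by []. Qed.

Lemma unit_normalize n (w : 'cV[R]_n) : 0 < enorm w -> enorm ((enorm w)^-1 *: w) = 1.
Proof.
move=> h; rewrite enormZ ger0_norm ?invr_ge0 ?enorm_ge0 // mulVf //.
by rewrite gt_eqF.
Qed.

Lemma step B x : enorm x = 1 -> 0 < rho B x ->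
  [/\ enorm (Tmap B s x) = 1, rho B x <= rho B^T (Tmap B s x) &
      enorm (Tmap B^T s (Tmap B s x) - x) ^+ 2 * rho B^T (Tmap B s x)
        = 2 * (rho B^T (Tmap B s x) - rho B x)].
Proof.
move=> x1 r0.
set y := Tmap B s x.
have y1 : enorm y = 1 by exact: unit_normalize.
set q := Ps B^T y s.
have key : dot x (res B^T y) = rho B x.
  rewrite /P5.res -/q pmx_tr -dotMl dotC /y TmapE dotZl.
  rewrite res_key ?Ps_monic ?Ps_size //.
  by rewrite expr2 mulrA mulVf ?mul1r // gt_eqF.
have le1 : rho B x <= rho B^T y.
  by rewrite -key; apply: le_trans (CS _ _) _; rewrite x1 mul1r.
have s0 : 0 < rho B^T y by apply: lt_le_trans le1.
split => //.
rewrite TmapE enorm_sq dotBl !dotBr !dotZl !dotZr -(enorm_sq x) x1.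
rewrite (dotC (res B^T y) x) key -enorm_sq.
have hr : rho B^T y != 0 by rewrite gt_eqF.
move: hr; rewrite /P5.rho; set r := enorm _; set r0' := rho B x => hr.
rewrite expr1n; field; exact: hr.
Qed.

End Step.

End P6.
Import P6.

Module P7.
Set Implicit Arguments. Unset Strict Implicit. Unset Printing Implicit Defensive.

Section RC.
Variable R : realType.

Lemma enorm_sum n k (F : 'I_k -> 'cV[R]_n) : enorm (\sum_i F i) <= \sum_i enorm (F i).
Proof.
elim/big_ind2: _ => [|a b c d h1 h2|i _]; first by rewrite enorm0.
  by apply: le_trans (enormD _ _) _; exact: lerD.
by [].
Qed.

Lemma gram_unit p q (K : 'M[R]_(p, q)) : (forall c : 'cV[R]_q, K *m c = 0 -> c = 0) ->
  K^T *m K \in unitmx.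
Proof.
move=> inj; rewrite unitmxE unitfE; apply/negP => /det0P [v vn0 hv].
have hK : K *m v^T = 0.
  apply: dot_eq0; rewrite -trmx_dot trmx_mul trmxK.
  by rewrite mulmxA -(mulmxA v) hv mul0mx mxE.
by move: vn0; rewrite -(trmxK v) (inj _ hK) trmx0 eqxx.
Qed.

Lemma leftinv p q (K : 'M[R]_(p, q)) : (forall c : 'cV[R]_q, K *m c = 0 -> c = 0) ->
  exists lam, 0 <= lam /\ forall c : 'cV[R]_q, enorm c <= lam * enorm (K *m c).
Proof.
move=> inj; have Gu := gram_unit inj.
exists (mxc (invmx (K^T *m K) *m K^T)); split; first exact: mxc_ge0.
move=> c; apply: le_trans (mxc_bound _ _).
by rewrite -mulmxA [K^T *m (K *m c)]mulmxA mulKmx.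
Qed.

Variable m : nat.
Local Notation N := m.+1.
Variable s : nat.
Implicit Types (B : 'M[R]_N) (x y : 'cV[R]_N).
Local Notation res := (@res R m s).
Local Notation rho := (@rho R m s).
Local Notation Kry := (@Kry R m s).

Definition kap B : R := \sum_(j < s) mxc (B ^+ j).

Lemma kap_ge0 B : 0 <= kap B.
Proof. by apply: sumr_ge0 => j _; exact: mxc_ge0. Qed.

Lemma Kry_bound B y (c : 'cV[R]_s) : enorm (Kry B y *m c) <= kap B * enorm y * enorm c.
Proof.
rewrite Kry_mul; apply: le_trans (enorm_sum _) _.
rewrite /kap !mulr_suml; apply: ler_sum => j _.
rewrite enormZ; apply: (le_trans (ler_wpM2l (normr_ge0 _) (mxc_bound _ _))).
rewrite [X in _ <= X]mulrC; apply: ler_wpM2r; last exact: enorm_coord.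
by rewrite mulr_ge0 ?mxc_ge0 ?enorm_ge0.
Qed.

Definition cx B x : 'cV[R]_s := \col_(j < s) (Ps B x s - 'X^s)`_j.

Lemma dec B x y : pmx B (Ps B x s) *m y = B ^+ s *m y + Kry B y *m cx B x.
Proof.
rewrite -{1}(subrK 'X^s (Ps B x s)) pmxD mulmxDl pmxXn addrC; congr (_ + _).
apply: lowdeg; apply: monic_sub; rewrite ?monicXn ?Ps_monic ?size_polyXn ?Ps_size //.
Qed.

Lemma RC_main B xs lam : 0 <= lam ->
  (forall c : 'cV[R]_s, enorm c <= lam * enorm (Kry B xs *m c)) ->
  forall x, enorm (x - xs) <= 1 -> 2 * lam * kap B * enorm (x - xs) <= 1 ->
  enorm (res B x - res B xs) <=
    Num.sqrt ((mxc (pmx B (Ps B xs s)) + (mxc (B ^+ s) + kap B * (4 * lam * mxc (B ^+ s) * (enorm xs + 1))))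
               * (2 * (rho B xs + mxc (pmx B (Ps B xs s)))) * enorm (x - xs))
    + mxc (pmx B (Ps B xs s)) * enorm (x - xs).
Proof.
move=> lam0 hlam x hd1 hdk.
set d := enorm (x - xs).
have {hd1}hd1 : d <= 1 := hd1.
have {hdk}hdk : 2 * lam * kap B * d <= 1 := hdk.
set be := mxc (B ^+ s); set ka := kap B; set G := 4 * lam * be * (enorm xs + 1).
set et := be + ka * G; set Ps0 := Ps B xs s; set ga := mxc (pmx B Ps0).
set fs := rho B xs.
have be0 : 0 <= be by exact: mxc_ge0.
have ka0 : 0 <= ka by exact: kap_ge0.
have ga0 : 0 <= ga by exact: mxc_ge0.
have d0 : 0 <= d by exact: enorm_ge0.
have G0 : 0 <= G by rewrite /G !mulr_ge0 ?addr_ge0 ?enorm_ge0.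
set c := cx B x.
have h1 : res B x = B ^+ s *m x + Kry B x *m c by rewrite /P5.res dec.
have h2 : rho B x <= enorm (B ^+ s *m x).
  by have := res_opt (s:=s) B x (monicXn _ s) (size_polyXn _ s); rewrite pmxXn.
have h3 : enorm (B ^+ s *m x) <= be * enorm x by exact: mxc_bound.
have h5 : enorm x <= enorm xs + d.
  by rewrite -{1}(subrK xs x) addrC; exact: enormD.
have h4 : enorm (Kry B x *m c) <= 2 * be * enorm x.
  have -> : Kry B x *m c = res B x - B ^+ s *m x by rewrite h1 addrAC subrr add0r.
  apply: le_trans (enormD _ _) _; rewrite enormN.
  rewrite /P5.rho in h2; lra.
have h6 : Kry B xs *m c = Kry B x *m c - Kry B (x - xs) *m c.
  by rewrite Kry_lin opprB addrC subrK.
have h7 : enorm c <= lam * (2 * be * enorm x + ka * d * enorm c).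
  apply: le_trans (hlam c) _; apply: ler_wpM2l => //.
  rewrite h6; apply: le_trans (enormD _ _) _; rewrite enormN.
  apply: lerD => //; exact: Kry_bound.
have h8 : enorm c <= G.
  have c0 := enorm_ge0 c.
  have hC : enorm c <= 4 * lam * be * enorm x.
    have hp : 0 <= (1 - 2 * lam * ka * d) * enorm c by rewrite mulr_ge0 // subr_ge0.
    nra.
  apply: le_trans hC _; rewrite /G; apply: ler_wpM2l; first by rewrite !mulr_ge0.
  lra.
have hPx : enorm (pmx B (Ps B x s) *m (x - xs)) <= et * d.
  rewrite dec; apply: le_trans (enormD _ _) _.
  have := mxc_bound (B ^+ s) (x - xs); rewrite -/be -/d => ha.
  have := Kry_bound B (x - xs) c; rewrite -/ka -/d => hb.
  have : ka * d * enorm c <= ka * d * G by apply: ler_wpM2l => //; rewrite mulr_ge0.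
  rewrite /et; lra.
have h9 : fs <= rho B x + et * d.
  have := res_opt B xs (Ps_monic s B x) (Ps_size s B x); rewrite -/fs => ha.
  apply: le_trans ha _.
  have -> : pmx B (Ps B x s) *m xs = res B x - pmx B (Ps B x s) *m (x - xs).
    by rewrite mulmxBr /P5.res opprB addrC subrK.
  apply: le_trans (enormD _ _) _; rewrite enormN; exact: lerD.
set z := pmx B Ps0 *m x.
have h10 : rho B x <= enorm z.
  by have := res_opt B x (Ps_monic s B xs) (Ps_size s B xs).
have h11 : dot (res B x) z = rho B x ^+ 2.
  by have := res_key B x (Ps_monic s B xs) (Ps_size s B xs).
have h12 : enorm (z - res B xs) <= ga * d.
  by rewrite /z /P5.res -mulmxBr; exact: mxc_bound.
have h12' : enorm z <= fs + ga * d.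
  rewrite -{1}(subrK (res B xs) z) addrC; apply: le_trans (enormD _ _) _.
  by rewrite /fs /P5.rho; lra.
have h13 : enorm (res B x - z) ^+ 2 = enorm z ^+ 2 - rho B x ^+ 2.
  rewrite !enorm_sq dotBl !dotBr (dotC z (res B x)) h11 -!enorm_sq /P5.rho; ring.
have h14 : enorm (res B x - z) ^+ 2 <= (ga + et) * (2 * (fs + ga)) * d.
  rewrite h13 (_ : enorm z ^+ 2 - rho B x ^+ 2 = (enorm z - rho B x) * (enorm z + rho B x)); last by ring.
  have r0 : 0 <= rho B x by exact: enorm_ge0.
  rewrite mulrAC; apply: ler_pM.
  - by rewrite subr_ge0.
  - by rewrite addr_ge0 ?enorm_ge0.
  - lra.
  - have : ga * d <= ga by rewrite ler_piMr.
    lra.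
apply: le_trans (enormDB _ z _) _; apply: lerD => //.
rewrite -(ler_pXn2r (n := 2)) ?nnegrE ?enorm_ge0 ?sqrtr_ge0 // [X in _ <= X]sqr_sqrtr //.
have fs0 : 0 <= fs by exact: enorm_ge0.
have et0 : 0 <= et by rewrite /et addr_ge0 // mulr_ge0.
apply: mulr_ge0 => //; apply: mulr_ge0; first lra.
apply: mulr_ge0 => //; lra.
Qed.

Lemma RC B xs : (forall c : 'cV[R]_s, Kry B xs *m c = 0 -> c = 0) ->
  forall e, 0 < e -> exists2 d, 0 < d &
    forall x, enorm (x - xs) < d -> enorm (res B x - res B xs) < e.
Proof.
move=> inj e e0; have [lam [lam0 hlam]] := leftinv inj.
pose ga := mxc (pmx B (Ps B xs s)).
pose et := mxc (B ^+ s) + kap B * (4 * lam * mxc (B ^+ s) * (enorm xs + 1)).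
pose M1 := (ga + et) * (2 * (rho B xs + ga)).
have hm : forall x, enorm (x - xs) <= 1 -> 2 * lam * kap B * enorm (x - xs) <= 1 ->
    enorm (res B x - res B xs) <= Num.sqrt (M1 * enorm (x - xs)) + ga * enorm (x - xs).
  exact: RC_main lam0 hlam.
have ga0 : 0 <= ga by exact: mxc_ge0.
have M10 : 0 <= M1.
  have fs0 : 0 <= rho B xs by exact: enorm_ge0.
  have et0 : 0 <= et.
    apply: addr_ge0; first exact: mxc_ge0.
    apply: mulr_ge0; first exact: kap_ge0.
    by rewrite !mulr_ge0 ?mxc_ge0 ?addr_ge0 ?enorm_ge0.
  by rewrite /M1; apply: mulr_ge0; [lra | apply: mulr_ge0 => //; lra].
have ka0 := kap_ge0 B.
set a1 := 2 * lam * kap B + 1.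
have a10 : 0 < a1 by rewrite /a1; apply: ltr_wpDl => //; rewrite !mulr_ge0.
set a2 := e ^+ 2 / (4 * (M1 + 1)).
have a20 : 0 < a2 by rewrite /a2 divr_gt0 ?exprn_gt0 // mulr_gt0 //; lra.
set a3 := e / (2 * (ga + 1)).
have a30 : 0 < a3 by rewrite /a3 divr_gt0 // mulr_gt0 //; lra.
exists (Num.min (Num.min 1 a1^-1) (Num.min a2 a3)).
  by rewrite !lt_min ltr01 invr_gt0 a10 a20 a30.
move=> x; rewrite !lt_min => /andP [/andP [h1 h2] /andP [h3 h4]].
set dd := enorm (x - xs) in h1 h2 h3 h4 *.
have dd0 : 0 <= dd by exact: enorm_ge0.
have hk : 2 * lam * kap B * dd <= 1.
  move: h2; rewrite -[X in _ < X]mul1r ltr_pdivlMr // /a1 => h2.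
  have : 0 <= dd by []. nra.
apply: le_lt_trans (hm x (ltW h1) hk) _.
have hs : Num.sqrt (M1 * dd) < e / 2.
  rewrite -[X in _ < X]ger0_norm ?divr_ge0 ?ltW // -sqrtr_sqr ltr_sqrt; last first.
    by rewrite exprn_gt0 // divr_gt0.
  move: h3; rewrite /a2 ltr_pdivlMr ?mulr_gt0 //; last lra.
  move=> h3; rewrite expr_div_n.
  rewrite ltr_pdivlMr; last by rewrite exprn_gt0.
  nra.
have hg : ga * dd < e / 2.
  move: h4; rewrite /a3 ltr_pdivlMr ?mulr_gt0 //; last lra.
  move=> h4; rewrite ltr_pdivlMr //. nra.
rewrite -/dd; lra.
Qed.

Lemma nlz n (a b : 'cV[R]_n) : 0 < enorm b -> enorm (a - b) <= enorm b / 2 ->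
  enorm ((enorm a)^-1 *: a - (enorm b)^-1 *: b) <= 2 * enorm (a - b) / enorm b.
Proof.
move=> nb0 hab.
have h1 := enorm_rev b a; rewrite enormB in h1.
have h2 := enorm_rev a b.
have na0 : 0 < enorm a by lra.
have -> : (enorm a)^-1 *: a - (enorm b)^-1 *: b =
    ((enorm a)^-1 - (enorm b)^-1) *: a + (enorm b)^-1 *: (a - b).
  by rewrite scalerBl scalerBr addrA subrK.
apply: le_trans (enormD _ _) _; rewrite !enormZ.
have -> : (enorm a)^-1 - (enorm b)^-1 = (enorm b - enorm a) / (enorm a * enorm b).
  by field; apply/andP; split; rewrite gt_eqF.
rewrite normrM normfV (ger0_norm (ltW (mulr_gt0 na0 nb0))).
rewrite [`|(enorm b)^-1|]ger0_norm ?invr_ge0 ?enorm_ge0 //.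
have -> : `|enorm b - enorm a| / (enorm a * enorm b) * enorm a = `|enorm b - enorm a| / enorm b.
  by field; apply/andP; split; rewrite gt_eqF.
have : `|enorm b - enorm a| <= enorm (a - b) by rewrite ler_norml; apply/andP; split; lra.
move=> h3.
have ib : 0 <= (enorm b)^-1 by rewrite invr_ge0 enorm_ge0.
apply: le_trans (lerD (ler_wpM2r ib h3) (lexx _)) _.
rewrite (mulrC (enorm b)^-1 (enorm (a - b))) -mulrDl.
by apply: ler_wpM2r => //; lra.
Qed.

Lemma Tcont B xs : 0 < rho B xs -> forall e, 0 < e -> exists2 d, 0 < d &
  forall x, enorm (x - xs) < d -> enorm (Tmap B s x - Tmap B s xs) < e.
Proof.
move=> r0 e e0.
have inj := rho_pos_inj r0.
have mi0 : 0 < Num.min e 1 by rewrite lt_min e0 ltr01.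
have mi1 : Num.min e 1 <= 1 by rewrite ge_min lexx orbT.
have mie : Num.min e 1 <= e by rewrite ge_min lexx.
set e1 := Num.min e 1 * rho B xs / 2.
have e10 : 0 < e1 by rewrite /e1 divr_gt0 // mulr_gt0.
have [d d0 hd] := RC inj e10.
exists d => // x hx.
have h := hd x hx.
have hab : enorm (res B x - res B xs) <= rho B xs / 2.
  apply: ltW; apply: lt_le_trans h _; rewrite /e1 ler_pM2r ?invr_gt0 // ger_pMl //.
have h2 := nlz r0 hab.
apply: le_lt_trans h2 _.
rewrite ltr_pdivrMr //; apply: lt_le_trans (_ : e1 * 2 <= _).
  lra.
by rewrite /e1 divfK ?ler_wpM2r ?enorm_ge0 //; lra.
Qed.

End RC.
End P7.
Import P7.


Theorem theorem3p5 (R : realType) (n s : nat) (A : 'M[R]_n) (v0 : 'cV[R]_n) :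
  (1 <= s)%N -> (s < mdeg A)%N -> enorm v0 = 1 -> (s.+1 <= grade A v0)%N ->
  closed (limit_points (ACI A s v0)) /\
  connected (limit_points (ACI A s v0)) /\
  limit_points (ACI A s v0) `<=` SigmaA A s /\
  (forall v, limit_points (ACI A s v0) v -> v = Tmap A^T s (Tmap A s v)).
Proof.
move=> _ _.
case: n A v0 => [|m] A v0 hv0 hg.
  by move: hv0; rewrite /enorm big_ord0 sqrtr0 => /eqP; rewrite eq_sym oner_eq0.
set v := ACI A s v0.
have vS : forall k, v k.+1 = Tmap A^T s (Tmap A s (v k)).
  by move=> k; rewrite /v /ACI iterS.
set mu0 := rho s A v0.
have mu00 : 0 < mu0 by exact: rho_pos hg.
have inv : forall k, enorm (v k) = 1 /\ mu0 <= rho s A (v k).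
  elim => [|k [IH1 IH2]]; first by split.
  have r0 : 0 < rho s A (v k) by apply: lt_le_trans IH2.
  have [y1 le1 _] := step IH1 r0.
  have r1 : 0 < rho s A^T (Tmap A s (v k)) by apply: lt_le_trans le1.
  have [y2 le2 _] := step y1 r1.
  rewrite trmxK in le2.
  by rewrite vS; split => //; apply: le_trans le2; apply: le_trans le1.
have chain : forall k, [/\ rho s A (v k) <= rho s A^T (Tmap A s (v k)),
    rho s A^T (Tmap A s (v k)) <= rho s A (v k.+1) &
    enorm (v k.+1 - v k) ^+ 2 * rho s A^T (Tmap A s (v k)) =
      2 * (rho s A^T (Tmap A s (v k)) - rho s A (v k))].
  move=> k; have [IH1 IH2] := inv k.
  have r0 : 0 < rho s A (v k) by apply: lt_le_trans IH2.
  have [y1 le1 eq1] := step IH1 r0.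
  have r1 : 0 < rho s A^T (Tmap A s (v k)) by apply: lt_le_trans le1.
  have [y2 le2 _] := step y1 r1.
  by rewrite trmxK in le2; rewrite vS; split.
have mono1 : forall k, rho s A (v k) <= rho s A (v k.+1).
  by move=> k; have [h1 h2 _] := chain k; apply: le_trans h2.
have mono : forall k j, (k <= j)%N -> rho s A (v k) <= rho s A (v j).
  move=> k j /subnK <-; elim: (j - k)%N => [|d IH]; first by rewrite add0n.
  by apply: le_trans IH _; rewrite addSn; exact: mono1.
have ub : forall k, rho s A (v k) <= mxc (A ^+ s).
  move=> k; have := res_opt (s:=s) A (v k) (monicXn _ s) (size_polyXn _ s).
  rewrite pmxXn => h; apply: le_trans h _.
  by apply: le_trans (mxc_bound _ _) _; rewrite (inv k).1 mulr1.
pose S := [set rho s A (v k) | k in [set: nat]].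
have hS : has_sup S.
  split; first by exists mu0; exists 0%N.
  by exists (mxc (A ^+ s)) => _ [k _ <-]; exact: ub.
have near_sup : forall e, 0 < e -> exists N, forall k, (N <= k)%N -> sup S - rho s A (v k) < e.
  move=> e e0; have [_ [N _ <-] hN] := sup_adherent e0 hS.
  exists N => k Nk; have := mono _ _ Nk; lra.
have steps : forall e, 0 < e -> exists N, forall k, (N <= k)%N -> enorm (v k.+1 - v k) < e.
  move=> e e0.
  have e'0 : 0 < e ^+ 2 * mu0 / 2 by rewrite divr_gt0 // mulr_gt0 // exprn_gt0.
  have [N hN] := near_sup _ e'0.
  exists N => k Nk; have := hN k Nk.
  have [h1 h2 h3] := chain k.
  have hs : rho s A (v k.+1) <= sup S by apply: sup_upper_bound => //; exists k.+1.
  have nu0 : mu0 <= rho s A^T (Tmap A s (v k)) by apply: le_trans h1; exact: (inv k).2.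
  move=> hk.
  have hE : enorm (v k.+1 - v k) ^+ 2 * mu0 < e ^+ 2 * mu0.
    apply: le_lt_trans (_ : _ <= enorm (v k.+1 - v k) ^+ 2 * rho s A^T (Tmap A s (v k))) _.
      by apply: ler_wpM2l => //; rewrite exprn_ge0 ?enorm_ge0.
    rewrite h3; lra.
  rewrite ltr_pM2r // in hE.
  by rewrite -(ltr_pXn2r (n := 2)) ?nnegrE ?enorm_ge0 ?ltW.
have u1 : forall k, enorm (v k) <= 1 by move=> k; rewrite (inv k).1.
split; first exact: limit_closed.
split; first exact: limit_connected u1 steps.
have Lprop : forall x, limit_points v x -> enorm x = 1 /\ (s.+1 <= grade A x)%N.
  move=> x Lx; split.
    apply/eqP; rewrite eq_le (limit_le1 u1 Lx) /=.
    apply/ler_addgt0Pr => e e0; have [k [_ hk]] := Lx e e0 0%N.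
    have := enorm_rev (v k) x; rewrite (inv k).1; lra.
  apply/contraT => /grade_low [q [mq sq hq]].
  set ga := mxc (pmx A q).
  have ga0 : 0 <= ga by exact: mxc_ge0.
  have d0 : 0 < mu0 / (ga + 1) by rewrite divr_gt0 //; lra.
  have [k [_ hk]] := Lx _ d0 0%N.
  have h1 := res_opt (s:=s) A (v k) mq sq.
  have e1 : pmx A q *m v k = pmx A q *m (v k - x) by rewrite mulmxBr hq subr0.
  rewrite e1 in h1.
  have h2 := mxc_bound (pmx A q) (v k - x).
  have h3 := (inv k).2.
  rewrite ltr_pdivlMr in hk; last lra.
  have h4 := enorm_ge0 (v k - x).
  suff : mu0 < mu0 by rewrite ltxx.
  rewrite -/ga in h2; nra.
split; first by move=> x Lx; exact: Lprop x Lx.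
move=> x Lx; have [x1 gx] := Lprop x Lx.
have r0 : 0 < rho s A x := rho_pos gx.
have [y1 le1 _] := step x1 r0.
have r1 : 0 < rho s A^T (Tmap A s x) by apply: lt_le_trans le1.
suff : enorm (Tmap A^T s (Tmap A s x) - x) = 0.
  by move/enorm_eq0/subr0_eq => h; symmetry; exact: h.
apply/eqP; rewrite eq_le enorm_ge0 andbT; apply/ler_addgt0Pr => e e0; rewrite add0r.
have e30 : 0 < e / 3 by rewrite divr_gt0.
have [d2 d20 hd2] := Tcont r1 e30.
have [d1 d10 hd1] := Tcont r0 d20.
have [N hN] := steps _ e30.
have m0 : 0 < Num.min d1 (e / 3) by rewrite lt_min d10 e30.
have [k [Nk hk]] := Lx _ m0 N.
move: hk; rewrite lt_min => /andP [hk1 hk2].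
have hw := hd1 _ hk1.
have hz := hd2 _ hw.
rewrite -vS in hz.
have hs := hN k Nk.
apply: le_trans (enormDB _ (v k.+1) _) _.
have := enormDB (v k.+1) (v k) x.
rewrite enormB in hz; lra.
Qed.
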